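(* Let $\mathcal{R}$ be a coherent risk measure on $\mathscr{L}^2$ with dual representation $\mathcal{R}(\xi_0)=\sup_{\eta_0\in\mathcal{Q}}\mathbb{E}(\xi_0\eta_0)$ for all $\xi_0\in\mathscr{L}^2$, where $\mathcal{Q}\subset\mathcal{P}$ is its (unique) risk envelope, and let $\mathcal{V}$ be a coherent regret measure on $\mathscr{L}^2$ with dual representation $\mathcal{V}(\xi_0)=\sup_{\eta_0\in\tilde{\mathcal{Q}}}\mathbb{E}(\xi_0\eta_0)$ for all $\xi_0\in\mathscr{L}^2$, where $\tilde{\mathcal{Q}}\subset\tilde{\mathcal{P}}$ is its (unique) regret envelope and $\tilde{\mathcal{Q}}$ is compact. Then $$\mathcal{R}(\xi_0)=\inf_{y\in\mathbb{R}}\{\,y+\mathcal{V}(\xi_0-y)\,\}\quad\text{for all }\xi_0\in\mathscr{L}^2$$ holds if and only if $\mathcal{Q}=\tilde{\mathcal{Q}}\cap\mathcal{P}$.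
   Context: $\mathscr{L}^2$ denotes the space of square-integrable real random variables on a fixed probability space with probability measure $\mathbb{P}$; $\mathbb{E}$ is expectation with respect to $\mathbb{P}$; inequalities between random variables hold almost everywhere. A functional $\mathcal{R}:\mathscr{L}^2\to(-\infty,+\infty]$ is a coherent risk measure if: (A1) $\mathcal{R}(C)=C$ for every constant $C$; (A2) $\mathcal{R}((1-\lambda)\xi_0+\lambda\xi_0')\le(1-\lambda)\mathcal{R}(\xi_0)+\lambda\mathcal{R}(\xi_0')$ for $\lambda\in[0,1]$; (A3) $\mathcal{R}(\xi_0)\le\mathcal{R}(\xi_0')$ whenever $\xi_0\le\xi_0'$ a.e.; (A4) if $\|\xi_0^k-\xi_0\|_2\to0$ and $\mathcal{R}(\xi_0^k)\le C$ for all $k$, then $\mathcal{R}(\xi_0)\le C$; (A5) $\mathcal{R}(\lambda\xi_0)=\lambda\mathcal{R}(\xi_0)$ for $\lambda>0$. A functional $\mathcal{V}:\mathscr{L}^2\to(-\infty,+\infty]$ is a coherent regret measure if: (B1) $\mathcal{V}(0)=0$; (B2) $\mathcal{V}$ is convex in the sense of (A2); (B3) $\mathcal{V}(\xi_0)\le\mathcal{V}(\xi_0')$ whenever $\xi_0\le\xi_0'$ a.e.; (B4) if $\|\xi_0^k-\xi_0\|_2\to0$ and $\mathcal{V}(\xi_0^k)\le0$ for all $k$, then $\mathcal{V}(\xi_0)\le0$; (B5) $\mathcal{V}(\lambda\xi_0)=\lambda\mathcal{V}(\xi_0)$ for $\lambda>0$. Set $\mathcal{P}=\{\eta_0\in\mathscr{L}^2:\mathbb{E}(\eta_0)=1,\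 \eta_0\ge0\}$ and $\tilde{\mathcal{P}}=\{\eta_0\in\mathscr{L}^2:\eta_0\ge0\}$. Every coherent risk measure $\mathcal{R}$ admits a unique nonempty, convex, closed set $\mathcal{Q}\subset\mathcal{P}$ (its risk envelope) with $\mathcal{R}(\xi_0)=\sup_{\eta_0\in\mathcal{Q}}\mathbb{E}(\xi_0\eta_0)$; every coherent regret measure $\mathcal{V}$ admits a unique nonempty, convex, closed set $\tilde{\mathcal{Q}}\subset\tilde{\mathcal{P}}$ with $\mathcal{V}(\xi_0)=\sup_{\eta_0\in\tilde{\mathcal{Q}}}\mathbb{E}(\xi_0\eta_0)$. *)

(* Defs.v *)
From HB Require Import structures.
From mathcomp Require Import all_boot all_order all_algebra.
From mathcomp Require Import all_classical all_reals all_analysis.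
Set Implicit Arguments. Unset Strict Implicit. Unset Printing Implicit Defensive.
Import Order.TTheory GRing.Theory Num.Theory.
Import numFieldNormedType.Exports.
Local Open Scope classical_set_scope.
Local Open Scope ring_scope.

Section L2defs.
Context {d : measure_display} {T : measurableType d} {R : realType}
  (P : probability T R).

Definition L2 (f : T -> R) : Prop :=
  measurable_fun setT f /\ P.-integrable setT (fun x => ((f x) ^+ 2)%:E).

Definition Ex (f : T -> R) : \bar R := (\int[P]_x (f x)%:E)%E.

Definition L2dist (f g : T -> R) : R :=
  Num.sqrt (fine (\int[P]_x (((f x - g x) ^+ 2)%:E))%E).

Definition L2conv (u : nat -> T -> R) (f : T -> R) : Prop :=
  (fun k => L2dist (u k) f) @ \oo --> 0.

Definition Pset : set (T -> R) :=
  [set eta | L2 eta /\ Ex eta = 1%E /\ {ae P, forall x, 0 <= eta x}].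
Definition Ptset : set (T -> R) :=
  [set eta | L2 eta /\ {ae P, forall x, 0 <= eta x}].

Definition L2convex (Q : set (T -> R)) : Prop :=
  forall eta eta' (l : R), Q eta -> Q eta' -> 0 <= l <= 1 ->
    Q (fun x => (1 - l) * eta x + l * eta' x).
Definition L2closed (Q : set (T -> R)) : Prop :=
  forall f, L2 f -> (forall e : R, 0 < e -> exists2 g, Q g & L2dist f g < e) ->
    Q f.
Definition L2compact (Q : set (T -> R)) : Prop :=
  forall u : nat -> T -> R, (forall n, Q (u n)) ->
    exists phi : nat -> nat, (forall n, (phi n < phi n.+1)%N) /\
      exists2 l, Q l & L2conv (fun n => u (phi n)) l.

Definition dual_sup (Q : set (T -> R)) (xi : T -> R) : \bar R :=
  ereal_sup [set Ex (fun x => xi x * eta x) | eta in Q].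

Definition coherent_risk (Rm : (T -> R) -> \bar R) : Prop :=
  (forall xi, L2 xi -> Rm xi != -oo%E) /\ [/\
      (forall C : R, Rm (fun _ => C) = C%:E),
      (forall xi xi' (l : R), L2 xi -> L2 xi' -> 0 <= l <= 1 ->
         (Rm (fun x => ((1 - l) * xi x + l * xi' x)%R) <=
          (1 - l)%:E * Rm xi + l%:E * Rm xi')%E),
      (forall xi xi', L2 xi -> L2 xi' -> {ae P, forall x, xi x <= xi' x} ->
         (Rm xi <= Rm xi')%E),
      (forall (u : nat -> T -> R) xi (C : R), (forall k, L2 (u k)) -> L2 xi ->
         L2conv u xi -> (forall k, (Rm (u k) <= C%:E)%E) -> (Rm xi <= C%:E)%E) &
      (forall xi (l : R), L2 xi -> 0 < l -> Rm (fun x => (l * xi x)%R) = (l%:E * Rm xi)%E)].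

Definition coherent_regret (V : (T -> R) -> \bar R) : Prop :=
  (forall xi, L2 xi -> V xi != -oo%E) /\ [/\
      V (fun _ => 0) = 0%E,
      (forall xi xi' (l : R), L2 xi -> L2 xi' -> 0 <= l <= 1 ->
         (V (fun x => ((1 - l) * xi x + l * xi' x)%R) <=
          (1 - l)%:E * V xi + l%:E * V xi')%E),
      (forall xi xi', L2 xi -> L2 xi' -> {ae P, forall x, xi x <= xi' x} ->
         (V xi <= V xi')%E),
      (forall (u : nat -> T -> R) xi, (forall k, L2 (u k)) -> L2 xi ->
         L2conv u xi -> (forall k, (V (u k) <= 0)%E) -> (V xi <= 0)%E) &
      (forall xi (l : R), L2 xi -> 0 < l -> V (fun x => (l * xi x)%R) = (l%:E * V xi)%E)].

End L2defs.

(* Main.v *)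
Require Import Defs.
From HB Require Import structures.
From mathcomp Require Import all_boot all_order all_algebra.
From mathcomp Require Import all_classical all_reals all_analysis.
From mathcomp Require Import measurable_realfun ring lra.
Set Implicit Arguments. Unset Strict Implicit. Unset Printing Implicit Defensive.
Import Order.TTheory GRing.Theory Num.Theory.
Import numFieldNormedType.Exports.
Local Open Scope classical_set_scope.
Local Open Scope ring_scope.

Section Basics.
Context {d : measure_display} {T : measurableType d} {R : realType}
  (P : probability T R).

Definition ip (f g : T -> R) : R := Rintegral P setT (fun x => f x * g x).
Definition Ir (h : T -> R) := P.-integrable setT (EFin \o h).

Lemma IrD f g : Ir f -> Ir g -> Ir (fun x => f x + g x).
Proof.
move=> If Ig; apply: (eq_integrable _ _ _ _ (integrableD _ If Ig)) => // x _.
Qed.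

Lemma IrZ (a : R) f : Ir f -> Ir (fun x => a * f x).
Proof.
move=> If; apply: (eq_integrable _ _ _ _ (integrableZl _ a If)) => // x _.
Qed.

Lemma Ircst (a : R) : Ir (fun _ => a).
Proof. exact: finite_measure_integrable_cst. Qed.

Lemma Ir_ext f g : f =1 g -> Ir f -> Ir g.
Proof. by move=> /funext ->. Qed.

Lemma L2_meas f : L2 P f -> measurable_fun setT f.
Proof. by case. Qed.

Lemma L2_sq f : L2 P f -> Ir (fun x => f x ^+ 2).
Proof. by case. Qed.

Lemma intM f g : L2 P f -> L2 P g -> Ir (fun x => f x * g x).
Proof.
move=> [mf If] [mg Ig].
have I2 : Ir (fun x => f x ^+ 2 + g x ^+ 2) by exact: IrD.
apply: (le_integrable _ _ _ I2) => //.
  by apply/measurable_EFinP; exact: measurable_funM.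
move=> x _ /=.
have h : 0 <= f x ^+ 2 + g x ^+ 2 by rewrite addr_ge0 ?sqr_ge0.
rewrite lee_fin (ger0_norm h) ler_norml.
have := sqr_ge0 (f x - g x); have := sqr_ge0 (f x + g x).
move=> h1 h2; apply/andP; split; nra.
Qed.

Lemma L2D f g : L2 P f -> L2 P g -> L2 P (fun x => f x + g x).
Proof.
move=> Lf Lg; split; first by apply: measurable_funD; exact: L2_meas.
have I2 : Ir (fun x => 2 * f x ^+ 2 + 2 * g x ^+ 2).
  by apply: IrD; apply: IrZ; exact: L2_sq.
apply: (le_integrable _ _ _ I2) => //.
  apply/measurable_EFinP; apply: measurable_funX.
  by apply: measurable_funD; exact: L2_meas.
move=> x _ /=.
have h : 0 <= 2 * f x ^+ 2 + 2 * g x ^+ 2.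
  by have := sqr_ge0 (f x); have := sqr_ge0 (g x); lra.
rewrite lee_fin (ger0_norm h) ger0_norm ?sqr_ge0 //.
have := sqr_ge0 (f x - g x); nra.
Qed.

Lemma L2Z (a : R) f : L2 P f -> L2 P (fun x => a * f x).
Proof.
move=> Lf; split.
  by apply: measurable_funM; [exact: measurable_cst | exact: L2_meas].
by apply: Ir_ext (IrZ (a ^+ 2) (L2_sq Lf)) => x; rewrite exprMn.
Qed.

Lemma L2cst (a : R) : L2 P (fun _ => a).
Proof. split; [exact: measurable_cst | exact: Ircst]. Qed.

Lemma L2lin (a b : R) f g : L2 P f -> L2 P g -> L2 P (fun x => a * f x + b * g x).
Proof. by move=> Lf Lg; apply: L2D; apply: L2Z. Qed.

Lemma L2B f g : L2 P f -> L2 P g -> L2 P (fun x => f x - g x).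
Proof.
move=> Lf Lg.
have -> : (fun x => f x - g x) = (fun x => 1 * f x + (-1) * g x).
  by apply: funext => x; rewrite mul1r mulN1r.
exact: L2lin.
Qed.

Lemma ipD f g h : L2 P f -> L2 P g -> L2 P h ->
  ip h (fun x => f x + g x) = ip h f + ip h g.
Proof.
move=> Lf Lg Lh; rewrite /ip -RintegralD //; try exact: intM.
by apply: eq_Rintegral => x _; rewrite mulrDr.
Qed.

Lemma ipZ (a : R) f h : L2 P f -> L2 P h ->
  ip h (fun x => a * f x) = a * ip h f.
Proof.
move=> Lf Lh; rewrite /ip -RintegralZl //; last exact: intM.
by apply: eq_Rintegral => x _; rewrite mulrCA.
Qed.

Lemma iplin (a b : R) f g h : L2 P f -> L2 P g -> L2 P h ->
  ip h (fun x => a * f x + b * g x) = a * ip h f + b * ip h g.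
Proof.
move=> Lf Lg Lh; rewrite ipD ?ipZ //; exact: L2Z.
Qed.

Lemma ipC f g : ip f g = ip g f.
Proof. by rewrite /ip; apply: eq_Rintegral => x _; rewrite mulrC. Qed.

Lemma ip_ge0 f : 0 <= ip f f.
Proof. by apply: Rintegral_ge0 => x _; rewrite -expr2 sqr_ge0. Qed.

Lemma Ex_ip f g : L2 P f -> L2 P g -> Ex P (fun x => f x * g x) = (ip f g)%:E.
Proof.
move=> Lf Lg; rewrite /ip /Rintegral fineK //.
exact: (integrable_fin_num _ (intM Lf Lg)).
Qed.


Lemma quad (a b : R) h v : L2 P h -> L2 P v ->
  ip (fun x => a * h x + b * v x) (fun x => a * h x + b * v x) =
  a ^+ 2 * ip h h + 2 * a * b * ip h v + b ^+ 2 * ip v v.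
Proof.
move=> Lh Lv; have Lw := L2lin a b Lh Lv.
rewrite iplin // (ipC _ h) (ipC _ v) !iplin //.
rewrite [ip v h]ipC; ring.
Qed.

Lemma CS h v : L2 P h -> L2 P v -> ip h v ^+ 2 <= ip h h * ip v v.
Proof.
move=> Lh Lv.
have q1 := ip_ge0 (fun x => ip v v * h x + (- ip h v) * v x).
have q2 := ip_ge0 (fun x => (- ip h v) * h x + ip h h * v x).
have q3 := ip_ge0 (fun x => 1 * h x + (- ip h v) * v x).
rewrite quad // in q1; rewrite quad // in q2; rewrite quad // in q3.
have A0 := ip_ge0 h; have B0 := ip_ge0 v.
move: q1 q2 q3 A0 B0; set A := ip h h; set B := ip v v; set c := ip h v.
move=> q1 q2 q3 A0 B0.
have [B0'|BE] := ltP 0 B.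
  nra.
have B00 : B = 0 by apply/eqP; rewrite eq_le BE B0.
have [A0'|AE] := ltP 0 A.
  nra.
have A00 : A = 0 by apply/eqP; rewrite eq_le AE A0.
rewrite A00 B00 in q3 *; nra.
Qed.

Lemma L2dist_sq f g : L2dist P f g ^+ 2 = ip (fun x => f x - g x) (fun x => f x - g x).
Proof.
rewrite /L2dist sqr_sqrtr; last by apply: fine_ge0; apply: integral_ge0 => x _; rewrite lee_fin sqr_ge0.
by rewrite /ip /Rintegral; congr fine; apply: eq_integral => x _; rewrite expr2.
Qed.

Lemma L2dist_ge0 f g : 0 <= L2dist P f g.
Proof. exact: sqrtr_ge0. Qed.

Lemma L2dist_sym f g : L2dist P f g = L2dist P g f.
Proof.
rewrite /L2dist; congr (Num.sqrt (fine _)); apply: eq_integral => x _.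
by rewrite -sqrrN opprB.
Qed.

Lemma L2conv_ev u l : L2conv P u l -> forall r, 0 < r ->
  exists N, forall n, (N <= n)%N -> L2dist P (u n) l < r.
Proof.
move=> /cvgrPdist_lt H r r0; have [N _ HN] := H r r0.
exists N => n Nn; have := HN n Nn; rewrite /= sub0r normrN ger0_norm //.
exact: L2dist_ge0.
Qed.

Lemma L2conv_ip u l : L2conv P u l -> forall r, 0 < r ->
  exists N, forall n, (N <= n)%N ->
    ip (fun x => u n x - l x) (fun x => u n x - l x) < r.
Proof.
move=> H r r0.
have m0 : 0 < Num.min r 1 by rewrite lt_min r0 ltr01.
have [N HN] := L2conv_ev H m0.
exists N => n Nn; rewrite -L2dist_sq.
have := HN n Nn; rewrite lt_min => /andP[h1 h2].
have h0 := L2dist_ge0 (u n) l.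
move: h0 h1 h2; set z := L2dist P (u n) l => h0 h1 h2; nra.
Qed.

Lemma ip_small w u l : L2 P w -> (forall n, L2 P (u n)) -> L2 P l ->
  L2conv P u l -> forall e, 0 < e ->
  exists N, forall n, (N <= n)%N -> `|ip w (fun x => u n x - l x)| <= e.
Proof.
move=> Lw Lu Ll H e e0.
have A0 := ip_ge0 w.
have r0 : 0 < e ^+ 2 / (ip w w + 1).
  by apply: divr_gt0; [exact: exprn_gt0 | lra].
have [N HN] := L2conv_ip H r0.
exists N => n Nn; have := HN n Nn.
have Lv : L2 P (fun x => u n x - l x) by exact: L2B.
have := CS Lw Lv.
set A := ip w w; set c := ip w _; set B := ip (fun x => u n x - l x) _.
move=> cs hB.
have {}A0 : 0 <= A := ip_ge0 w.
have hB' : B * (A + 1) < e ^+ 2.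
  by rewrite -ltr_pdivlMr //; lra.
have B0 : 0 <= B by exact: ip_ge0.
have c2 : c ^+ 2 < e ^+ 2 by nra.
rewrite -(real_normK (num_real c)) in c2.
have := normr_ge0 c; nra.
Qed.


Lemma incr_ge (phi : nat -> nat) : (forall n, (phi n < phi n.+1)%N) ->
  forall n, (n <= phi n)%N.
Proof.
move=> H; elim=> [//|n IH]; exact: leq_ltn_trans IH (H n).
Qed.

Lemma exists_min (K : set (T -> R)) (D : (T -> R) -> R) :
  K !=set0 -> L2compact P K -> (forall f, K f -> 0 <= D f) ->
  (forall u l, (forall n, K (u n)) -> K l -> L2conv P u l ->
     forall e, 0 < e -> exists N, forall n, (N <= n)%N -> D l <= D (u n) + e) ->
  exists2 p, K p & forall q, K q -> D p <= D q.
Proof.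
move=> [f0 Kf0] Kc D0 lsc.
pose S := D @` K.
have lbS : has_lbound S by exists 0 => _ [f Kf <-]; exact: D0.
have hS : has_inf S by split => //; exists (D f0), f0.
pose m := inf S.
have ex : forall n : nat, exists f, K f /\ D f < m + n.+1%:R^-1.
  move=> n; have pos : 0 < n.+1%:R^-1 :> R by rewrite invr_gt0 ltr0Sn.
  have [_ [f Kf <-] Hf] := inf_adherent pos hS.
  by exists f.
have [u Hu] := choice ex.
have [phi [phi_inc [l Kl Hl]]] := Kc u (fun n => (Hu n).1).
exists l => // q Kq.
apply: (@le_trans _ _ m); last by apply: ge_inf => //; exists q.
apply/ler_addgt0Pr => e e0.
have e2 : 0 < e / 2 by rewrite divr_gt0.
have [N HN] := lsc _ _ (fun n => (Hu (phi n)).1) Kl Hl _ e2.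
have [k _ Hk] := near_infty_natSinv_lt (PosNum e2).
pose n := maxn N k.
have h1 := HN n (leq_maxl N k).
have h2 := (Hu (phi n)).2.
have h3 : (phi n).+1%:R^-1 <= k.+1%:R^-1 :> R.
  rewrite lef_pV2 ?posrE ?ltr0Sn // ler_nat ltnS.
  exact: leq_trans (leq_maxr N k) (incr_ge phi_inc n).
have h4 : k.+1%:R^-1 < e / 2 := Hk k (leqnn k).
have h5 := le_lt_trans h3 h4.
simpl in h1. move: h1 h2 h5.
generalize (D (u (phi n))) (D l) ((phi n).+1%:R^-1 : R) m => a b c mm.
lra.
Qed.


Lemma var_real (s B : R) : (forall t, 0 < t <= 1 -> 2 * t * s <= t ^+ 2 * B) -> s <= 0.
Proof.
move=> H; rewrite leNgt; apply/negP => s0.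
pose t := Num.min 1 (s / (`|B| + 1)).
have nB := normr_ge0 B.
have t0 : 0 < t by rewrite lt_min ltr01 divr_gt0 //; lra.
have t1 : t <= 1 by rewrite ge_min lexx.
have t2 : t * (`|B| + 1) <= s.
  by rewrite -ler_pdivlMr; [rewrite ge_min lexx orbT | lra].
have := H t; rewrite t0 t1 => /(_ isT) H1.
have H2 : 2 * s <= t * B.
  by rewrite -(ler_pM2l t0); move: H1; rewrite expr2; lra.
have := ler_norm B; nra.
Qed.

Lemma ipB f g h : L2 P f -> L2 P g -> L2 P h ->
  ip h (fun x => f x - g x) = ip h f - ip h g.
Proof.
move=> Lf Lg Lh.
have -> : (fun x => f x - g x) = (fun x => 1 * f x + (-1) * g x).
  by apply: funext => x; rewrite mul1r mulN1r.
by rewrite iplin // mul1r mulN1r.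
Qed.

Lemma separate (K : set (T -> R)) eta0 :
  K !=set0 -> L2compact P K -> L2convex K -> L2closed P K ->
  (forall f, K f -> L2 P f) -> L2 P eta0 -> ~ K eta0 ->
  exists xi c, [/\ L2 P xi, (forall eta, K eta -> ip xi eta <= c) & c < ip xi eta0].
Proof.
move=> K0 Kc Kcv Kcl KL L0 nK.
pose D f := ip (fun x => f x - eta0 x) (fun x => f x - eta0 x).
have [p Kp pmin] : exists2 p, K p & forall q, K q -> D p <= D q.
  apply: exists_min => //; first by move=> f _; exact: ip_ge0.
  move=> u l Ku Kl Hl e e0.
  have e2 : 0 < e / 2 by rewrite divr_gt0.
  have Lw : L2 P (fun x => l x - eta0 x) by apply: L2B => //; exact: KL.
  have [N HN] := ip_small Lw (fun n => KL _ (Ku n)) (KL _ Kl) Hl e2.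
  exists N => n Nn; have := HN n Nn.
  have Lv : L2 P (fun x => u n x - l x) by apply: L2B; exact: KL.
  have -> : D (u n) = ip (fun x => 1 * (l x - eta0 x) + 1 * (u n x - l x))
                         (fun x => 1 * (l x - eta0 x) + 1 * (u n x - l x)).
    rewrite /D; congr ip; apply: funext => x; ring.
  rewrite quad //.
  have := ip_ge0 (fun x => u n x - l x).
  rewrite /D; set A := ip _ (fun x => u n x - l x); set w := ip _ _.
  move=> A0; rewrite ler_norml => /andP[h1 h2]; lra.
have Lp := KL _ Kp.
pose xi := fun x => eta0 x - p x.
have Lxi : L2 P xi by exact: L2B.
exists xi, (ip xi p); split => //.
  move=> eta Keta; have Le := KL _ Keta.
  have Lv : L2 P (fun x => eta x - p x) by exact: L2B.
  suff : ip xi (fun x => eta x - p x) <= 0 by rewrite ipB //; lra.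
  apply: (@var_real _ (ip (fun x => eta x - p x) (fun x => eta x - p x))).
  move=> t /andP[t0 t1].
  have tt : 0 <= t <= 1 by rewrite (ltW t0) t1.
  have Kt := Kcv p eta t Kp Keta tt.
  have := pmin _ Kt.
  have -> : D (fun x => (1 - t) * p x + t * eta x) =
     ip (fun x => (-1) * xi x + t * (eta x - p x))
        (fun x => (-1) * xi x + t * (eta x - p x)).
    by rewrite /D; congr ip; apply: funext => x; rewrite /xi; ring.
  have -> : D p = ip (fun x => (-1) * xi x + 0 * (eta x - p x))
        (fun x => (-1) * xi x + 0 * (eta x - p x)).
    by rewrite /D; congr ip; apply: funext => x; rewrite /xi; ring.
  rewrite !quad //; lra.
have -> : ip xi eta0 = ip xi p + ip xi xi.
  by rewrite /xi [in RHS]ipB // [ip xi p + _]addrC subrK.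
have : ip xi xi != 0.
  apply/negP => /eqP h0; apply: nK; apply: Kcl => // e e0; exists p => //.
  have := L2dist_sq eta0 p; rewrite -/xi h0 => h.
  have : L2dist P eta0 p = 0 by apply/eqP; rewrite -sqrf_eq0 h.
  by move=> ->.
have := ip_ge0 xi; rewrite le_eqVlt => /predU1P[<-|h _]; first by rewrite eqxx.
lra.
Qed.


Lemma lsc_lin h u l : L2 P h -> (forall n, L2 P (u n)) -> L2 P l ->
  L2conv P u l -> forall r, 0 < r ->
  exists N, forall n, (N <= n)%N -> `|ip h (u n) - ip h l| <= r.
Proof.
move=> Lh Lu Ll H r r0; have [N HN] := ip_small Lh Lu Ll H r0.
by exists N => n Nn; rewrite -ipB //; exact: HN.
Qed.

Lemma minimax2 (K : set (T -> R)) xi c :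
  L2compact P K -> L2convex K -> (forall f, K f -> L2 P f) -> L2 P xi ->
  (forall eta, K eta -> ip (fun _ => 1) eta = 1 -> ip xi eta < c) ->
  (exists eta1, K eta1 /\ ip (fun _ => 1) eta1 = 1) ->
  exists y, forall eta, K eta -> ip xi eta - y * ip (fun _ => 1) eta <= c - y.
Proof.
move=> Kc Kcv KL Lxi Hlt [eta1 [K1 E1]].
have L1 : L2 P (fun _ : T => 1) := L2cst 1.
pose a f := ip (fun _ => 1) f; pose b f := ip xi f.
pose D f := (a f - 1) ^+ 2 + (b f - c) ^+ 2.
have [p Kp pmin] : exists2 p, K p & forall q, K q -> D p <= D q.
  apply: exists_min => //; first by exists eta1.
    by move=> f _; rewrite /D addr_ge0 ?sqr_ge0.
  move=> u l Ku Kl Hl e e0.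
  set A := a l - 1; set B := b l - c.
  pose M := 2 * `|A| + 2 * `|B| + 1.
  have M0 : 0 < M by rewrite /M; have := normr_ge0 A; have := normr_ge0 B; lra.
  have r0 : 0 < e / M by rewrite divr_gt0.
  have Lu := fun n => KL _ (Ku n); have Ll := KL _ Kl.
  have [N1 H1] := lsc_lin L1 Lu Ll Hl r0.
  have [N2 H2] := lsc_lin Lxi Lu Ll Hl r0.
  exists (maxn N1 N2) => n Nn.
  have := H1 n (leq_trans (leq_maxl _ _) Nn).
  have := H2 n (leq_trans (leq_maxr _ _) Nn).
  rewrite /D -/(a (u n)) -/(a l) -/(b (u n)) -/(b l).
  set d1 := a (u n) - a l; set d2 := b (u n) - b l.
  have -> : a (u n) - 1 = A + d1 by rewrite /A /d1; ring.
  have -> : b (u n) - c = B + d2 by rewrite /B /d2; ring.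
  move=> h2 h1.
  have k1 : - (2 * `|A| * (e / M)) <= 2 * A * d1.
    have : `|A * d1| <= `|A| * (e / M) by rewrite normrM ler_wpM2l.
    by rewrite ler_norml => /andP[k _]; lra.
  have k2 : - (2 * `|B| * (e / M)) <= 2 * B * d2.
    have : `|B * d2| <= `|B| * (e / M) by rewrite normrM ler_wpM2l.
    by rewrite ler_norml => /andP[k _]; lra.
  have kM : (2 * `|A| + 2 * `|B|) * (e / M) <= e.
    rewrite mulrA ler_pdivrMr // /M; have := normr_ge0 A; have := normr_ge0 B; nra.
  rewrite -/A -/B; have := sqr_ge0 d1; have := sqr_ge0 d2; nra.
have Lp := KL _ Kp.
have hab : forall eta, K eta -> forall t, a (fun x => (1 - t) * p x + t * eta x) = (1 - t) * a p + t * a eta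
   /\ b (fun x => (1 - t) * p x + t * eta x) = (1 - t) * b p + t * b eta.
  by move=> eta Keta t; rewrite /a /b !iplin //; exact: KL.
set al := 1 - a p; set be := c - b p.
have var : forall eta, K eta -> al * (a eta - a p) + be * (b eta - b p) <= 0.
  move=> eta Keta.
  apply: (@var_real _ ((a eta - a p) ^+ 2 + (b eta - b p) ^+ 2)) => t /andP[t0 t1].
  have tt : 0 <= t <= 1 by rewrite (ltW t0) t1.
  have := pmin _ (Kcv p eta t Kp Keta tt).
  rewrite /D; have [-> ->] := hab eta Keta t.
  rewrite /al /be; nra.
have Hp : a p = 1 -> b p < c by exact: Hlt.
have nz : 0 < al ^+ 2 + be ^+ 2.
  have [//|h] := ltP 0 (al ^+ 2 + be ^+ 2).
  have h0 : al = 0 /\ be = 0 by split; nra.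
  move: h0 => [h1 h2]; have := Hp; rewrite /al /be in h1 h2.
  have -> : a p = 1 by lra.
  move=> /(_ erefl); lra.
have b1 : b eta1 < c by exact: Hlt.
have bepos : 0 < be.
  have := var _ K1; rewrite /a E1 -/(a p) -/al.
  have [//|hb] := ltP 0 be.
  have : be * (b eta1 - b p) = be * (b eta1 - c) + be ^+ 2 by rewrite /be; ring.
  nra.
exists (- al / be) => eta Keta.
set y := - al / be.
have hy : be * y = - al by rewrite /y mulrC divfK //; exact: lt0r_neq0.
have key : be * (b eta - y * a eta) <= be * (c - y).
  rewrite mulrBr (mulrA be y) hy mulrBr hy.
  have := var _ Keta.
  have : al * a p + be * b p = al + be * c - (al ^+ 2 + be ^+ 2) by rewrite /al /be; ring.
  lra.
by rewrite ler_pM2l in key.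
Qed.


Lemma Ex1 eta : L2 P eta -> Ex P eta = (ip (fun _ => 1) eta)%:E.
Proof.
move=> Le; rewrite -Ex_ip //; last exact: L2cst.
by congr (Ex P _); apply: funext => x; rewrite mul1r.
Qed.

Lemma Ex_shift xi eta (y : R) : L2 P xi -> L2 P eta ->
  Ex P (fun x => (xi x - y) * eta x) = (ip xi eta - y * ip (fun _ => 1) eta)%:E.
Proof.
move=> Lx Le; rewrite Ex_ip //; last by apply: L2B => //; exact: L2cst.
congr EFin; rewrite ipC ipB //; last exact: L2cst.
rewrite ipC; congr (_ - _); rewrite [LHS]ipC [ip (fun=> 1) eta]ipC.
have := @ipZ y (fun _ => 1) eta (L2cst 1) Le.
have -> : (fun x : T => y * (fun=> 1) x) = (fun _ : T => y) by apply: funext => x; rewrite mulr1.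
by move=> <-; exact: ipC.
Qed.

End Basics.

Theorem theorem1 (d : measure_display) (T : measurableType d) (R : realType)
  (P : probability T R)
  (Rm : (T -> R) -> \bar R) (Q : set (T -> R))
  (V : (T -> R) -> \bar R) (Qt : set (T -> R)) :
  coherent_risk P Rm ->
  Q !=set0 -> L2convex Q -> L2closed P Q -> Q `<=` Pset P ->
  (forall xi, L2 P xi -> Rm xi = dual_sup P Q xi) ->
  coherent_regret P V ->
  Qt !=set0 -> L2convex Qt -> L2closed P Qt -> Qt `<=` Ptset P ->
  (forall xi, L2 P xi -> V xi = dual_sup P Qt xi) ->
  L2compact P Qt ->
  ((forall xi, L2 P xi ->
      Rm xi = ereal_inf [set (y%:E + V (fun x => (xi x - y)%R))%E | y in [set: R]])
   <-> Q = Qt `&` Pset P).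
Proof.
move=> _ Q0 Qcv Qcl QP RQ _ Qt0 Qtcv Qtcl QtP VQt Qtc.
have QL : forall f, Q f -> L2 P f by move=> f /QP [].
have QtL : forall f, Qt f -> L2 P f by move=> f /QtP [].
have Vsh : forall xi y, L2 P xi -> V (fun x => xi x - y) =
    ereal_sup [set (ip P xi eta - y * ip P (fun _ => 1) eta)%:E | eta in Qt].
  move=> xi y Lx; rewrite VQt; last by apply: L2B => //; exact: L2cst.
  rewrite /dual_sup; congr ereal_sup; apply/seteqP; split => _ [eta Qe <-];
    exists eta => //; rewrite Ex_shift //; exact: QtL.
have RQ' : forall xi, L2 P xi -> Rm xi =
    ereal_sup [set (ip P xi eta)%:E | eta in Q].
  move=> xi Lx; rewrite RQ // /dual_sup; congr ereal_sup; apply/seteqP; split => _ [eta Qe <-];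
    exists eta => //; rewrite Ex_ip //; exact: QL.
have PE1 : forall eta, Pset P eta -> ip P (fun _ => 1) eta = 1.
  by move=> eta [Le [Ee _]]; apply: EFin_inj; rewrite -Ex1.
have EP1 : forall eta, Qt eta -> ip P (fun _ => 1) eta = 1 -> Pset P eta.
  move=> eta Qe h; have [Le ae] := QtP _ Qe; split => //; split => //.
  by rewrite Ex1 // h.
split.
- move=> H.
  have sub1 : Q `<=` Qt `&` Pset P.
    move=> eta0 Qe0; split; last exact: QP.
    apply: contrapT => nQt.
    have [xi [c [Lxi Hle Hlt]]] := separate Qt0 Qtc Qtcv Qtcl QtL (QL _ Qe0) nQt.
    have h1 : ((ip P xi eta0)%:E <= Rm xi)%E.
      by rewrite RQ' //; apply: ereal_sup_ubound; exists eta0.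
    have h2 : (Rm xi <= c%:E)%E.
      rewrite H //; apply: (@le_trans _ _ (0%:E + V (fun x => (xi x - 0)%R))%E).
        by apply: ereal_inf_lbound; exists 0.
      rewrite Vsh // add0e; apply: ge_ereal_sup => _ [eta Qe <-].
      by rewrite mul0r subr0 lee_fin; exact: Hle.
    have := le_trans h1 h2; rewrite lee_fin; lra.
  apply/seteqP; split => //.
  move=> eta0 [Qte0 Pe0]; apply: contrapT => nQ.
  have Qc : L2compact P Q.
    move=> u Qu.
    have [phi [inc [l Qtl Hl]]] := Qtc u (fun n => (sub1 _ (Qu n)).1).
    exists phi; split => //; exists l => //.
    apply: Qcl (QtL _ Qtl) _ => e e0.
    have [N HN] := L2conv_ev Hl e0.
    by exists (u (phi N)) => //; rewrite L2dist_sym; exact: HN N (leqnn N).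
  have [xi [c [Lxi Hle Hlt]]] := separate Q0 Qc Qcv Qcl QL (QtL _ Qte0) nQ.
  have E1 := PE1 _ Pe0.
  have h1 : (Rm xi <= c%:E)%E.
    rewrite RQ' //; apply: ge_ereal_sup => _ [eta Qe <-].
    by rewrite lee_fin; exact: Hle.
  have h2 : ((ip P xi eta0)%:E <= Rm xi)%E.
    rewrite H //; apply: le_ereal_inf_tmp => _ [y _ <-]; rewrite Vsh //.
    apply: (@le_trans _ _ (y%:E + (ip P xi eta0 - y * ip P (fun _ => 1) eta0)%R%:E)%E).
      by rewrite E1 mulr1 -EFinD lee_fin addrC subrK.
    by apply: leeD2l; apply: ereal_sup_ubound; exists eta0.
  have := le_trans h2 h1; rewrite lee_fin; lra.
- move=> QE xi Lx.
  rewrite RQ' //; apply/eqP; rewrite eq_le; apply/andP; split.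
    apply: ge_ereal_sup => _ [eta Qe <-].
    apply: le_ereal_inf_tmp => _ [y _ <-]; rewrite Vsh //.
    have [Qte Pe] : (Qt `&` Pset P) eta by rewrite -QE.
    apply: (@le_trans _ _ (y%:E + (ip P xi eta - y * ip P (fun _ => 1) eta)%R%:E)%E).
      by rewrite (PE1 _ Pe) mulr1 -EFinD lee_fin addrC subrK.
    by apply: leeD2l; apply: ereal_sup_ubound; exists eta.
  have [eta1 Q1] := Q0.
  have [Qt1 P1] : (Qt `&` Pset P) eta1 by rewrite -QE.
  apply/lee_addgt0Pr => e e0.
  set s := ereal_sup _.
  have s1 : ((ip P xi eta1)%:E <= s)%E by apply: ereal_sup_ubound; exists eta1.
  case Hs: s => [r| |]; last by rewrite Hs in s1.
    have hyp1 : forall eta, Qt eta -> ip P (fun _ => 1) eta = 1 -> ip P xi eta < r + e.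
      move=> eta Qe E1.
      have Qe' : Q eta by rewrite QE; split => //; exact: EP1.
      have : ((ip P xi eta)%:E <= s)%E by apply: ereal_sup_ubound; exists eta.
      by rewrite Hs lee_fin => h; lra.
    have [y Hy] := minimax2 Qtc Qtcv QtL Lx hyp1 (ex_intro _ eta1 (conj Qt1 (PE1 _ P1))).
    apply: (@le_trans _ _ (y%:E + V (fun x => (xi x - y)%R))%E).
      by apply: ereal_inf_lbound; exists y.
    have : (ereal_sup [set (ip P xi eta - y * ip P (fun _ => 1) eta)%R%:E | eta in Qt]
        <= (r + e - y)%R%:E)%E.
      by apply: ge_ereal_sup => _ [eta Qe <-]; rewrite lee_fin; exact: Hy.
    move/(leeD2l y%:E); rewrite -Vsh // -EFinD (addrC y) subrK EFinD.
    by [].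
  by rewrite leey.
Qed.
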